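(* Let $V = k[[t]]$ be the formal power series ring over a field $k$, and set $R = k[[t^3, t^8, t^{13}]]$ and $S = k[[t^3, t^5]]$, subrings of $V$. Then $R$ is strictly closed in $S$, but $R$ is not strictly closed in $V$.
   Context: For an extension of commutative rings $R \subseteq S$, the strict closure of $R$ in $S$ is $R^* = \{\alpha \in S \mid \alpha\otimes 1 = 1\otimes \alpha \text{ in } S\otimes_R S\}$; $R$ is strictly closed in $S$ if $R=R^*$. *)

(* Defs.v *)
From HB Require Import structures.
From mathcomp Require Import all_boot all_order all_algebra.
Set Implicit Arguments. Unset Strict Implicit. Unset Printing Implicit Defensive.
Import GRing.Theory.
Local Open Scope ring_scope.

(* Formal power series k[[t]] over k, represented by their coefficient
   sequences: f n = coefficient of t^n. *)
Definition pseries (k : fieldType) := nat -> k.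

Definition ps_add (k : fieldType) (f g : pseries k) : pseries k :=
  fun n => f n + g n.

Definition ps_mul (k : fieldType) (f g : pseries k) : pseries k :=
  fun n => \sum_(i < n.+1) f i * g (n - i)%N.

Definition ps_one (k : fieldType) : pseries k :=
  fun n => if n == 0%N then 1 else 0.

Fixpoint in_numsg (gens : seq nat) (n : nat) : Prop :=
  match gens with
  | [::] => n = 0%N
  | g :: gs => exists a : nat, (a * g <= n)%N /\ in_numsg gs (n - a * g)%N
  end.

(* The subring k[[t^g1, ..., t^gm]] of k[[t]]: the power series all of whose
   exponents lie in the numerical semigroup generated by g1, ..., gm. *)
Definition monomial_subring (k : fieldType) (gens : seq nat) (f : pseries k)
  : Prop := forall n, f n != 0 -> in_numsg gens n.

Definition balanced (k : fieldType) (R S : pseries k -> Prop)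
  (A : zmodType) (f : pseries k -> pseries k -> A) : Prop :=
  [/\ forall x x' y, S x -> S x' -> S y ->
        f (ps_add x x') y = f x y + f x' y,
      forall x y y', S x -> S y -> S y' ->
        f x (ps_add y y') = f x y + f x y' &
      forall r x y, R r -> S x -> S y ->
        f (ps_mul r x) y = f x (ps_mul r y)].

(* x (x) y = x' (x) y' in S (x)_R S, via the universal property of the
   tensor product (elements of S (x)_R S are equal iff every R-balanced
   biadditive map to an abelian group identifies them). *)
Definition tensor_eq (k : fieldType) (R S : pseries k -> Prop)
  (x y x' y' : pseries k) : Prop :=
  forall (A : zmodType) (f : pseries k -> pseries k -> A),
    balanced R S f -> f x y = f x' y'.

Definition strict_closure (k : fieldType) (R S : pseries k -> Prop)
  (a : pseries k) : Prop :=
  S a /\ tensor_eq R S a (ps_one k) (ps_one k) a.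

Definition strictly_closed (k : fieldType) (R S : pseries k -> Prop) : Prop :=
  forall a, strict_closure R S a <-> R a.

(* Main.v *)
Require Import Defs.
From mathcomp Require Import all_boot all_order all_algebra.
From mathcomp Require Import zify.
From Stdlib Require Import FunctionalExtensionality.
Set Implicit Arguments. Unset Strict Implicit. Unset Printing Implicit Defensive.
Import GRing.Theory.
Local Open Scope ring_scope.

Definition mono (k : fieldType) (j : nat) : pseries k :=
  fun n => if n == j then 1 else 0.

Lemma mono0 (k : fieldType) : ps_one k = mono k 0.
Proof. by []. Qed.

Lemma ps_mul_mono_l (k : fieldType) (i : nat) (g : pseries k) n :
  ps_mul (mono k i) g n = if (i <= n)%N then g (n - i)%N else 0.
Proof.
rewrite /ps_mul /mono; case: (leqP i n) => Hi.
  have Hi' : (i < n.+1)%N by [].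
  rewrite (bigD1 (Ordinal Hi')) //= eqxx mul1r big1 ?addr0 // => l Hl.
  rewrite ifN ?mul0r //; apply/eqP => E; move/eqP: Hl; apply.

rewrite big1 // => l _; rewrite ifN ?mul0r //.
have := ltn_ord l; rewrite ltnS => H; apply/negP => /eqP E.
by rewrite E in H; lia.
Qed.

Lemma ps_mul_mono (k : fieldType) i j :
  ps_mul (mono k i) (mono k j) = mono k (i + j).
Proof.
apply: functional_extensionality => n; rewrite ps_mul_mono_l /mono.
case: leqP => H.
  by case: eqP; case: eqP => //; lia.
by case: eqP => //; lia.
Qed.

Lemma ps_mul_r1 (k : fieldType) (f : pseries k) : ps_mul f (ps_one k) = f.
Proof.
apply: functional_extensionality => n; rewrite /ps_mul big_ord_recr /=.
rewrite subnn /ps_one eqxx mulr1 big1 ?add0r // => i _.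
rewrite ifN ?mulr0 //; have := ltn_ord i; lia.
Qed.

Lemma mul_coef (k : fieldType) (r x : pseries k) n :
  (forall i, (0 < i <= n)%N -> r i * x (n - i)%N = 0) ->
  ps_mul r x n = r 0%N * x n.
Proof.
move=> H; rewrite /ps_mul big_ord_recl /= subn0 big1 ?addr0 // => i _.
apply: H; rewrite /bump /=; have := ltn_ord i; lia.
Qed.

Lemma notin_zero (k : fieldType) gens (f : pseries k) i :
  ~ in_numsg gens i -> monomial_subring gens f -> f i = 0.
Proof.
move=> Hn Hf; case: (f i =P 0) => // /eqP H; exfalso; exact: Hn (Hf _ H).
Qed.

Ltac killS := move=> /= [? [? [? [? ?]]]]; lia.
Ltac killR := move=> /= [? [? [? [? [? [? ?]]]]]]; lia.

Lemma coefR (k : fieldType) (r x : pseries k) n :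
  monomial_subring [:: 3; 8; 13]%N r -> monomial_subring [:: 3; 5]%N x ->
  (n = 0 \/ n = 5 \/ n = 10)%N ->
  ps_mul r x n = r 0%N * x n.
Proof.
move=> Hr Hx Hn; apply: mul_coef => i Hi.
have : ~ in_numsg [:: 3; 8; 13]%N i \/ ~ in_numsg [:: 3; 5]%N (n - i)%N.
  have Hi10 : (i <= 10)%N by lia.
  case: Hn => [E|[E|E]]; subst n; (do 11! (case: i Hi Hi10 => [|i] Hi Hi10; [
    first [ by lia | left; killR | right; killS ] | ])); lia.
case=> H; [by rewrite (notin_zero H Hr) mul0r | by rewrite (notin_zero H Hx) mulr0].
Qed.

Lemma numsg_sub n : in_numsg [:: 3; 8; 13]%N n -> in_numsg [:: 3; 5]%N n.
Proof.
move=> /= [a [Ha [b [Hb [c [Hc H]]]]]].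
exists (a + b + c)%N; split; first lia.
exists (b + 2 * c)%N; split => /=; lia.
Qed.

Lemma numsg_RS n : in_numsg [:: 3; 5]%N n -> n <> 5%N -> n <> 10%N ->
  in_numsg [:: 3; 8; 13]%N n.
Proof.
move=> HS H5 H10.
have E := divn_eq n 3; have L : (n %% 3 < 3)%N by rewrite ltn_pmod.
move: (n %/ 3)%N (n %% 3)%N E L => q r E L.
have : (r = 0 \/ r = 1 \/ r = 2)%N by lia.
case=> [R0|[R1|R2]].
- exists q; split; first lia. exists 0%N; split; first lia.
  exists 0%N; split => /=; lia.
- case: (leqP 4 q) => Hq.
    exists (q - 4)%N; split; first lia. exists 0%N; split; first lia.
    exists 1%N; split => /=; lia.
  exfalso; move: HS; killS.
- case: (leqP 2 q) => Hq.
    exists (q - 2)%N; split; first lia. exists 1%N; split; first lia.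
    exists 0%N; split => /=; lia.
  exfalso; move: HS; killS.
Qed.

Lemma one_in gens (k : fieldType) : monomial_subring gens (ps_one k).
Proof.
move=> n; rewrite /ps_one; case: ifP => [/eqP -> _|]; last by rewrite eqxx.
by elim: gens => [|g gs IH] //=; exists 0%N; split.
Qed.

Definition fcoef (k : fieldType) (m : nat) (x y : pseries k) : k := x m * y 0%N.

Lemma bal_fcoef (k : fieldType) m : (m = 5 \/ m = 10)%N ->
  balanced (@monomial_subring k [:: 3; 8; 13]%N) (@monomial_subring k [:: 3; 5]%N)
    (fcoef m).
Proof.
move=> Hm; split.
- by move=> x x' y _ _ _; rewrite /fcoef /ps_add mulrDl.
- by move=> x y y' _ _ _; rewrite /fcoef /ps_add mulrDr.
- move=> r x y Hr Hx Hy.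
  have Hn : (m = 0 \/ m = 5 \/ m = 10)%N by case: Hm; auto.
  rewrite /fcoef (coefR Hr Hx Hn) (coefR Hr Hy (or_introl erefl)).
  by rewrite mulrA (mulrC (x m)).
Qed.

Theorem mainTheorem5 (k : fieldType) :
  strictly_closed (@monomial_subring k [:: 3; 8; 13]%N)
                  (@monomial_subring k [:: 3; 5]%N)
  /\ ~ strictly_closed (@monomial_subring k [:: 3; 8; 13]%N)
                       (fun _ : pseries k => True).
Proof.
split.
- move=> a; split.
  + move=> [Sa Heq].
    have h5 := Heq _ _ (@bal_fcoef k 5 (or_introl erefl)).
    have h10 := Heq _ _ (@bal_fcoef k 10 (or_intror erefl)).
    rewrite /fcoef /ps_one /= mulr1 mul0r in h5.
    rewrite /fcoef /ps_one /= mulr1 mul0r in h10.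
    move=> n Hn; apply: numsg_RS; first exact: Sa.
    * by move=> E; rewrite E h5 eqxx in Hn.
    * by move=> E; rewrite E h10 eqxx in Hn.
  + move=> Ra; split.
    * by move=> n /Ra /numsg_sub.
    * move=> A f [_ _ Hb].
      rewrite -{1}(ps_mul_r1 a) Hb ?ps_mul_r1 //; try exact: one_in.
- move=> H.
  have : monomial_subring [:: 3; 8; 13]%N (mono k 10).
    apply/H; split => // A f [_ _ Hb].
    rewrite mono0.
    change (mono k 10) with (mono k (8 + 2)).
    have R8 : monomial_subring [:: 3; 8; 13]%N (mono k 8).
      move=> n; rewrite /mono; case: ifP => [/eqP -> _|]; last by rewrite eqxx.
      by exists 0%N; split => //; exists 1%N; split => //; exists 0%N.
    have R6 : monomial_subring [:: 3; 8; 13]%N (mono k 6).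
      move=> n; rewrite /mono; case: ifP => [/eqP -> _|]; last by rewrite eqxx.
      by exists 2%N; split => //; exists 0%N; split => //; exists 0%N.
    have E1 : f (mono k (8 + 2)) (mono k 0) = f (mono k 2) (mono k 8).
      by rewrite -ps_mul_mono Hb // ps_mul_mono addn0.
    have E2 : f (mono k 2) (mono k 8) = f (mono k 8) (mono k 2).
      by rewrite -[8%N]/(6 + 2)%N -ps_mul_mono Hb.
    have E3 : f (mono k 8) (mono k 2) = f (mono k 0) (mono k (8 + 2)).
      by rewrite -ps_mul_mono -Hb // ps_mul_mono addn0.
    by rewrite E1 E2 E3.
  move=> /(_ 10%N); rewrite /mono eqxx oner_eq0 => /(_ isT); killR.
Qed.
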